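(* Let $f(x)=\frac{2x}{\tanh x}-\log\left(\frac{\cosh^2 x+1}{2}\right)$ for $x>0$. There is a point $x_1=1.606\ldots$ such that for all $x>0$, $$2<f(x)\le f(x_1)=2.1312\ldots .$$ *)

(* Defs.v *)
From Stdlib Require Import Reals.
Open Scope R_scope.

Definition fpaper (x : R) : R := 2 * x / tanh x - ln ((cosh x ^ 2 + 1) / 2).

(* Main.v *)
Require Import Defs.
From Stdlib Require Import Reals Lra Lia Factorial.
From Coquelicot Require Import Coquelicot.
Open Scope R_scope.
Fixpoint es (n:nat) (x:R) : R * R := match n with 0 => (1, 1) | S m => let (s,t) := es m x in let t' := t * x / IZR (Z.of_nat (S m)) in (s + t', t') end.

Lemma es_spec n x : es n x = (sum_f_R0 (fun k => x^k / INR (fact k)) n, x^n / INR (fact n)).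
Proof.
  induction n as [|n IH]; [simpl; f_equal; field|].
  simpl es. rewrite IH. simpl sum_f_R0. 
  assert (Hf : INR (fact (S n)) = INR (S n) * INR (fact n)) by (rewrite fact_simpl, mult_INR; reflexivity).
  assert (Hp : 0 < INR (fact n)) by (apply lt_0_INR, lt_O_fact).
  assert (Hs : 0 < INR (S n)) by (apply lt_0_INR; lia).
  replace (IZR (Z.pos (PosDef.Pos.of_succ_nat n))) with (INR (S n)) by (rewrite INR_IZR_INZ; reflexivity).
  change (fact n + n * fact n)%nat with (fact (S n)). rewrite Hf. f_equal; simpl pow; field; lra.
Qed.

Lemma Dn_exp n x : Derive_n exp n x = exp x.
Proof.
  revert x; induction n as [|n IH]; intro x; [reflexivity|].
  simpl. rewrite (Derive_ext _ exp x IH). apply is_derive_unique, is_derive_exp.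
Qed.

Lemma exn_exp n x : ex_derive_n exp n x.
Proof.
  destruct n; [exact I|]. simpl.
  apply (ex_derive_ext exp); [intro t; symmetry; apply Dn_exp|].
  eexists; apply is_derive_exp.
Qed.

Lemma exp_hi_gen n x : 0 < x -> exp x * (1 - snd (es (S n) x)) <= fst (es n x).
Proof.
  intro Hx. rewrite !es_spec. simpl fst; simpl snd.
  destruct (Taylor_Lagrange exp n 0 x Hx) as [z [Hz E]].
  { intros; apply exn_exp. }
  rewrite Dn_exp in E.
  assert (Hs : sum_f_R0 (fun m : nat => (x - 0) ^ m / INR (fact m) * Derive_n exp m 0) n
     = sum_f_R0 (fun k : nat => x ^ k / INR (fact k)) n).
  { apply sum_eq; intros; rewrite Dn_exp, exp_0, Rminus_0_r; ring. }
  rewrite Hs in E. replace (x - 0) with x in E by ring.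
  assert (exp z <= exp x) by (apply Rlt_le, exp_increasing; lra).
  assert (0 <= x ^ S n / INR (fact (S n))).
  { apply Rle_mult_inv_pos; [apply pow_le; lra| apply lt_0_INR, lt_O_fact]. }
  set (r := x ^ S n / INR (fact (S n))) in *.
  assert (r * exp z <= r * exp x) by (apply Rmult_le_compat_l; auto).
  change (x * x ^ n / INR (fact n + n * fact n)) with r. lra.
Qed.

Lemma exp_lo n x lo : 0 < x -> lo <= fst (es n x) -> lo <= exp x.
Proof. intros Hx H. rewrite es_spec in H. simpl in H. pose proof (exp_ge_taylor x n). lra. Qed.

Lemma exp_hi n x hi : 0 < x -> snd (es (S n) x) < 1 -> fst (es n x) <= hi * (1 - snd (es (S n) x)) -> exp x <= hi.
Proof. intros Hx H1 H2. pose proof (exp_hi_gen n x Hx). 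
  apply (Rmult_le_reg_r (1 - snd (es (S n) x))); lra. Qed.

Lemma e_bnd : 13591409/5000000 <= exp 1 <= 27182819/10000000.
Proof. split; [apply (exp_lo 15)| apply (exp_hi 15)]; try lra; cbn; lra. Qed.
Lemma Ea_bnd : 2491419975999/500000000000 <= exp (1606/1000) <= 2491419976233/500000000000.
Proof. split; [apply (exp_lo 15)| apply (exp_hi 15)]; try lra; cbn; lra. Qed.

Lemma Eb_bnd : 24939126421/5000000000 <= exp (1607/1000) <= 4987825284673/1000000000000.
Proof. split; [apply (exp_lo 15)| apply (exp_hi 15)]; try lra; cbn; lra. Qed.
Lemma U_bnd : 19293106233/5000000000 <= exp (135030993/100000000).
Proof. apply (exp_lo 15); [lra| cbn; lra]. Qed.
Lemma L_bnd : exp (1350309929/1000000000) <= 38586212459/10000000000.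
Proof. apply (exp_hi 15); try lra; cbn; lra. Qed.

Definition H0 t := 2 * cosh t * sinh t - t * (cosh t ^ 2 + 1).
Definition H1 t := 3 * sinh t ^ 2 - 2 * t * cosh t * sinh t.
Definition H2 t := 4 * cosh t * sinh t - 2 * t * (cosh t ^ 2 + sinh t ^ 2).
Definition H3 t := 2 * (cosh t ^ 2 + sinh t ^ 2) - 8 * t * cosh t * sinh t.
Definition H4 t := -8 * t * (cosh t ^ 2 + sinh t ^ 2).
Definition G0 t := t * cosh t - sinh t.
Definition G1 t := t * sinh t.

Ltac dtac := apply is_derive_Reals; unfold H0, H1, H2, H3, H4, G0, G1, cosh, sinh; auto_derive; [try easy| rewrite exp_Ropp; field; apply Rgt_not_eq, exp_pos].

Lemma dH0 t : derivable_pt_lim H0 t (H1 t). Proof. dtac. Qed.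
Lemma dH1 t : derivable_pt_lim H1 t (H2 t). Proof. dtac. Qed.
Lemma dH2 t : derivable_pt_lim H2 t (H3 t). Proof. dtac. Qed.
Lemma dH3 t : derivable_pt_lim H3 t (H4 t). Proof. dtac. Qed.
Lemma dG0 t : derivable_pt_lim G0 t (G1 t). Proof. dtac. Qed.

Definition fder t := 2 * H0 t / (sinh t ^ 2 * (cosh t ^ 2 + 1)).

Lemma dF t : 0 < t -> derivable_pt_lim fpaper t (fder t).
Proof.
  intro Ht. assert (0 < exp (-t) < exp t) by (split; [apply exp_pos| apply exp_increasing; lra]).
  apply is_derive_Reals. unfold fder, fpaper, H0, tanh, cosh, sinh. auto_derive.
  all: try rewrite exp_Ropp in *.
  all: assert (HE : 0 < exp t) by apply exp_pos.
  all: assert (Hu : exp t * / exp t = 1) by (apply Rinv_r; lra).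
  - split; [lra|]. split; [apply Rmult_integral_contrapositive_currified; [lra| apply Rinv_neq_0_compat; lra]|].
    split; [nra| exact I].
  - assert (1 < exp t * exp t) by nra.
    field. repeat split; nra.
Qed.

Lemma mvt_i (g g' : R -> R) a b : a < b -> (forall t, a <= t <= b -> derivable_pt_lim g t (g' t)) ->
  exists z, a < z < b /\ g b - g a = g' z * (b - a).
Proof. intros Hab Hd. destruct (MVT_cor2 g g' a b Hab Hd) as [z [Hz Hz']]. exists z; split; auto. Qed.

Lemma mvt_sign (g g' : R -> R) a b : (forall t, derivable_pt_lim g t (g' t)) -> a < b ->
  exists z, a < z < b /\ g b - g a = g' z * (b - a).
Proof. intros Hd Hab. apply mvt_i; auto. Qed.

Lemma inc_pos (g g' : R->R) c : (forall t, derivable_pt_lim g t (g' t)) ->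
  (forall t, 0<t<c -> 0 < g' t) -> forall t, 0 < t <= c -> g 0 < g t.
Proof.
  intros Hd Hp t Ht. destruct (mvt_sign g g' 0 t Hd) as [z [Hz E]]; [lra|].
  assert (0 < g' z) by (apply Hp; lra). nra.
Qed.

Lemma chain (g g' : R -> R) c T : (forall t, derivable_pt_lim g t (g' t)) -> 0 <= c -> 0 <= g 0 ->
  (0 < c \/ 0 < g 0) -> (forall t, 0<t<c -> 0<g' t) -> (forall t, c<t -> g' t<0) -> 0 < T -> g T < 0 ->
  exists r, c<r /\ g r = 0 /\ (forall t, 0<t<r -> 0<g t) /\ (forall t, r<t -> g t<0).
Proof.
  intros Hd Hc H0 Hor Hp Hn HT HgT.
  assert (P1 : forall t, 0 < t <= c -> 0 < g t).
  { intros t Ht. pose proof (inc_pos g g' c Hd Hp t Ht). lra. }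
  assert (Pc : 0 < g c).
  { destruct Hor as [Hor|Hor]; [apply P1; lra|]. destruct (Req_dec c 0) as [->|]; [auto| apply P1; lra]. }
  assert (Dec : forall a b, c <= a < b -> g b < g a).
  { intros a b Hab. destruct (mvt_sign g g' a b Hd) as [z [Hz E]]; [lra|].
    assert (g' z < 0) by (apply Hn; lra). nra. }
  assert (HcT : c < T).
  { destruct (Rlt_le_dec c T) as [|HTc]; auto. assert (0 < g T) by (apply P1; lra). lra. }
  assert (Hcont : continuity g).
  { intro x. apply derivable_continuous_pt. exists (g' x). apply Hd. }
  destruct (IVT_cor g c T Hcont (Rlt_le _ _ HcT)) as [r [Hr Er]]; [nra|].
  assert (c < r) by (destruct (Req_dec r c) as [->|]; lra).
  exists r; repeat split; auto.
  - intros t Ht. destruct (Rle_lt_dec t c). apply P1; lra.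
    pose proof (Dec t r ltac:(lra)). lra.
  - intros t Ht. pose proof (Dec r t ltac:(lra)). lra.
Qed.

Lemma ch_e t : cosh t = (exp t + / exp t) / 2.
Proof. unfold cosh; rewrite exp_Ropp; reflexivity. Qed.
Lemma sh_e t : sinh t = (exp t - / exp t) / 2.
Proof. unfold sinh; rewrite exp_Ropp; reflexivity. Qed.
Lemma Eu1 t : exp t * / exp t = 1.
Proof. apply Rinv_r, Rgt_not_eq, exp_pos. Qed.
Lemma uE1 t : 0 < / exp t.
Proof. apply Rinv_0_lt_compat, exp_pos. Qed.
Lemma sh_pos t : 0 < t -> 0 < sinh t.
Proof. intro. rewrite <- sinh_0. apply sinh_lt; auto. Qed.
Lemma ch_pos t : 0 < cosh t.
Proof. rewrite ch_e. pose proof (exp_pos t); pose proof (uE1 t). lra. Qed.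
Lemma ch_sh t : cosh t ^ 2 - sinh t ^ 2 = 1.
Proof. rewrite ch_e, sh_e. rewrite <- (Eu1 t). field. apply Rgt_not_eq, exp_pos. Qed.
Lemma exp_le' x y : x <= y -> exp x <= exp y.
Proof. intro H. destruct (Rle_lt_or_eq_dec x y H) as [h| ->]; [apply Rlt_le, exp_increasing; auto| lra]. Qed.
Lemma ln_le' x y : 0 < x -> x <= y -> ln x <= ln y.
Proof. intros Hx H. destruct (Rle_lt_or_eq_dec x y H) as [h| ->]; [apply Rlt_le, ln_increasing; auto| lra]. Qed.
Lemma le_div q c s : 0 < s -> q * s <= c -> q <= c / s.
Proof. intros Hs H. apply (Rmult_le_reg_r s); auto. unfold Rdiv; rewrite Rmult_assoc, Rinv_l; lra. Qed.
Lemma div_le q c s : 0 < s -> c <= q * s -> c / s <= q.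
Proof. intros Hs H. apply (Rmult_le_reg_r s); auto. unfold Rdiv; rewrite Rmult_assoc, Rinv_l; lra. Qed.
Lemma inv_bnd E u El Eu ul uu : 0 < El -> El <= E <= Eu -> E * u = 1 -> ul * Eu <= 1 -> 1 <= uu * El -> ul <= u <= uu.
Proof. intros. assert (0 < u) by nra. split; nra. Qed.

Lemma fform t : 0 < t -> fpaper t = 2 * t * (cosh t / sinh t) - ln ((cosh t ^ 2 + 1) / 2).
Proof. intro Ht. pose proof (sh_pos t Ht). pose proof (ch_pos t). unfold fpaper, tanh. field. lra. Qed.

Lemma fder_sign t : 0 < t -> (0 < H0 t -> 0 < fder t) /\ (H0 t < 0 -> fder t < 0).
Proof.
  intro Ht. pose proof (sh_pos t Ht). unfold fder.
  assert (0 < sinh t ^ 2 * (cosh t ^ 2 + 1)) by (apply Rmult_lt_0_compat; nra).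
  split; intro; [apply Rdiv_lt_0_compat; lra|]. unfold Rdiv.
  assert (0 < / (sinh t ^ 2 * (cosh t ^ 2 + 1))) by (apply Rinv_0_lt_compat; auto). nra.
Qed.

Lemma H0a : 0 < H0 (1606/1000).
Proof.
  unfold H0. rewrite ch_e, sh_e. pose proof Ea_bnd as [A B]. pose proof (Eu1 (1606/1000)).
  set (E := exp (1606/1000)) in *. set (u := / E) in *.
  assert (HU : 200688765751/1000000000000 <= u <= 200688765771/1000000000000) by (eapply inv_bnd; eauto; lra).
  assert (E * E >= 2491419975999/500000000000 * (2491419975999/500000000000)) by nra.
  assert (u * u <= 200688765771/1000000000000 * (200688765771/1000000000000)) by nra.
  nra.
Qed.

Lemma H0b : H0 (1607/1000) < 0.
Proof.
  unfold H0. rewrite ch_e, sh_e. pose proof Eb_bnd as [A B]. pose proof (Eu1 (1607/1000)).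
  set (E := exp (1607/1000)) in *. set (u := / E) in *.
  assert (HU : 200488177297/1000000000000 <= u <= 200488177317/1000000000000) by (eapply inv_bnd; eauto; lra).
  assert (E * E <= 4987825284673/1000000000000 * (4987825284673/1000000000000)) by nra.
  assert (u * u >= 200488177297/1000000000000 * (200488177297/1000000000000)) by nra.
  nra.
Qed.

Lemma root_exists : exists r, 1606/1000 < r < 1607/1000 /\
  (forall t, 0<t<r -> 0<H0 t) /\ (forall t, r<t -> H0 t<0).
Proof.
  pose proof e_bnd as [e1 e2].
  assert (A3 : H3 0 = 2) by (unfold H3; rewrite cosh_0, sinh_0; ring).
  assert (A2 : H2 0 = 0) by (unfold H2; rewrite cosh_0, sinh_0; ring).
  assert (A1 : H1 0 = 0) by (unfold H1; rewrite cosh_0, sinh_0; ring).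
  assert (A0 : H0 0 = 0) by (unfold H0; rewrite cosh_0, sinh_0; ring).
  assert (N4 : forall t, 0 < t -> H4 t < 0).
  { intros t Ht. unfold H4. pose proof (pow_lt _ 2 (ch_pos t)). pose proof (pow2_ge_0 (sinh t)). nra. }
  assert (T3 : H3 1 < 0).
  { unfold H3. rewrite ch_e, sh_e. pose proof (Eu1 1). pose proof (uE1 1).
    set (E := exp 1) in *. set (u := / E) in *. assert (u <= 1/2) by nra. nra. }
  destruct (chain H3 H4 0 1 dH3 (Rle_refl 0) ltac:(lra) ltac:(lra) ltac:(intros; lra) N4 ltac:(lra) T3)
    as [r3 [Hr3 [_ [P3 N3]]]].
  assert (T2 : H2 2 < 0).
  { unfold H2. rewrite ch_e, sh_e. pose proof (Eu1 2). pose proof (uE1 2). pose proof (exp_pos 2). nra. }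
  destruct (chain H2 H3 r3 2 dH2 ltac:(lra) ltac:(lra) ltac:(lra) P3 N3 ltac:(lra) T2)
    as [r2 [Hr2 [_ [P2 N2]]]].
  assert (T1 : H1 2 < 0).
  { unfold H1. pose proof (sh_pos 2 ltac:(lra)). rewrite ch_e, sh_e in *. pose proof (Eu1 2). pose proof (uE1 2). pose proof (exp_pos 2). nra. }
  destruct (chain H1 H2 r2 2 dH1 ltac:(lra) ltac:(lra) ltac:(lra) P2 N2 ltac:(lra) T1)
    as [r1 [Hr1 [_ [P1 N1]]]].
  destruct (chain H0 H1 r1 (1607/1000) dH0 ltac:(lra) ltac:(lra) ltac:(lra) P1 N1 ltac:(lra) H0b)
    as [r [Hr [Z [P N]]]].
  exists r. split; [|split; auto].
  pose proof H0a; pose proof H0b. split.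
  - destruct (Rlt_le_dec (1606/1000) r) as [|h]; auto.
    destruct (Rle_lt_or_eq_dec _ _ h) as [h'|h']; [pose proof (N _ h'); lra| rewrite <- h' in *; lra].
  - destruct (Rlt_le_dec r (1607/1000)) as [|h]; auto.
    destruct (Rle_lt_or_eq_dec _ _ h) as [h'|h']; [pose proof (P (1607/1000) ltac:(lra)); lra| rewrite h' in *; lra].
Qed.

Lemma f_incr r (Hp : forall t, 0<t<r -> 0<H0 t) a b : 0 < a -> a < b -> b <= r -> fpaper a < fpaper b.
Proof.
  intros Ha Hab Hb. destruct (mvt_i fpaper fder a b Hab) as [z [Hz E]].
  { intros t Ht. apply dF; lra. }
  assert (0 < fder z) by (apply (fder_sign z ltac:(lra)), Hp; lra). nra.
Qed.

Lemma f_decr r (Hr : 0 < r) (Hn : forall t, r<t -> H0 t<0) a b : r <= a -> a < b -> fpaper b < fpaper a.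
Proof.
  intros Ha Hab. destruct (mvt_i fpaper fder a b Hab) as [z [Hz E]].
  { intros t Ht. apply dF; lra. }
  assert (fder z < 0) by (apply (fder_sign z ltac:(lra)), Hn; lra). nra.
Qed.

Lemma Fa_lo : 21312/10000 <= fpaper (1606/1000).
Proof.
  rewrite fform by lra. pose proof Ea_bnd as [A B]. pose proof (Eu1 (1606/1000)). pose proof U_bnd.
  assert (Hq : 541966211/500000000 <= cosh (1606/1000) / sinh (1606/1000)).
  { apply le_div; [apply sh_pos; lra|]. rewrite ch_e, sh_e.
    set (E := exp (1606/1000)) in *. set (u := / E) in *.
    assert (HU : 200688765751/1000000000000 <= u <= 200688765771/1000000000000) by (eapply inv_bnd; eauto; lra).
    lra. }
  assert (Hv : (cosh (1606/1000) ^ 2 + 1) / 2 <= exp (135030993/100000000)).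
  { rewrite ch_e. set (E := exp (1606/1000)) in *. set (u := / E) in *.
    assert (HU : 200688765751/1000000000000 <= u <= 200688765771/1000000000000) by (eapply inv_bnd; eauto; lra).
    assert ((E + u) * (E + u) <= (2491419976233/500000000000 + 200688765771/1000000000000) * (2491419976233/500000000000 + 200688765771/1000000000000)) by nra.
    nra. }
  apply ln_le' in Hv; [| pose proof (pow2_ge_0 (cosh (1606/1000))); lra]. rewrite ln_exp in Hv. lra.
Qed.

Lemma Fa_hi : fpaper (1606/1000) <= 2131283/1000000.
Proof.
  rewrite fform by lra. pose proof Ea_bnd as [A B]. pose proof (Eu1 (1606/1000)). pose proof L_bnd.
  assert (Hq : cosh (1606/1000) / sinh (1606/1000) <= 10839324221/10000000000).
  { apply div_le; [apply sh_pos; lra|]. rewrite ch_e, sh_e.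
    set (E := exp (1606/1000)) in *. set (u := / E) in *.
    assert (HU : 200688765751/1000000000000 <= u <= 200688765771/1000000000000) by (eapply inv_bnd; eauto; lra).
    lra. }
  assert (Hv : exp (1350309929/1000000000) <= (cosh (1606/1000) ^ 2 + 1) / 2).
  { rewrite ch_e. set (E := exp (1606/1000)) in *. set (u := / E) in *.
    assert (HU : 200688765751/1000000000000 <= u <= 200688765771/1000000000000) by (eapply inv_bnd; eauto; lra).
    assert ((E + u) * (E + u) >= (2491419975999/500000000000 + 200688765751/1000000000000) * (2491419975999/500000000000 + 200688765751/1000000000000)) by nra.
    nra. }
  apply ln_le' in Hv; [| apply exp_pos]. rewrite ln_exp in Hv. lra.
Qed.

Lemma fder_small z : 1606/1000 <= z <= 1607/1000 -> fder z <= 1/500.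
Proof.
  intro Hz. pose proof Ea_bnd as [A B]. pose proof Eb_bnd as [C D]. pose proof (Eu1 z).
  pose proof (exp_le' _ _ (proj1 Hz)). pose proof (exp_le' _ _ (proj2 Hz)).
  assert (Hs : 0 < sinh z) by (apply sh_pos; lra).
  assert (HD : 0 < sinh z ^ 2 * (cosh z ^ 2 + 1)) by (apply Rmult_lt_0_compat; nra).
  unfold fder. apply div_le; auto.
  unfold H0. rewrite ch_e, sh_e in *. set (E := exp z) in *. set (u := / E) in *.
  assert (HU : 200488177297/1000000000000 <= u <= 200688765771/1000000000000) by (apply (inv_bnd E u (2491419975999/500000000000) (4987825284673/1000000000000)); lra).
  assert (Hc : 6479/2500 <= (E + u)/2 <= 25943/10000) by lra.
  assert (Hs2 : 2391/1000 <= (E - u)/2 <= 23937/10000) by lra.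
  set (c := (E+u)/2) in *. set (s := (E-u)/2) in *.
  assert (c * s <= 25943/10000 * (23937/10000)) by nra.
  assert (c ^ 2 >= 6479/2500 * (6479/2500)) by nra.
  assert (s ^ 2 >= 2391/1000 * (2391/1000)) by nra.
  assert (s ^ 2 * (c ^ 2 + 1) >= 2391/1000 * (2391/1000) * (6479/2500 * (6479/2500) + 1)) by nra.
  nra.
Qed.

Lemma tcs t : 0 < t -> sinh t < t * cosh t.
Proof.
  intro Ht. assert (G0 0 < G0 t).
  { apply (inc_pos G0 G1 t dG0); [| lra]. intros x Hx. unfold G1. pose proof (sh_pos x ltac:(lra)). nra. }
  unfold G0 in H. rewrite cosh_0, sinh_0 in H. lra.
Qed.

Lemma ln_sub1 v : 0 < v -> ln v <= v - 1.
Proof. intro Hv. rewrite <- (ln_exp (v - 1)). apply ln_le'; auto. pose proof (exp_ineq1_le (v - 1)). lra. Qed.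

Lemma fge t : 0 < t -> 2 - sinh t ^ 2 / 2 <= fpaper t.
Proof.
  intro Ht. rewrite fform by auto. pose proof (tcs t Ht). pose proof (sh_pos t Ht). pose proof (ch_pos t).
  assert (1 / t <= cosh t / sinh t) by (apply le_div; auto; replace (1 / t * sinh t) with (sinh t / t) by (field; lra); apply div_le; lra).
  assert (2 * t * (1 / t) = 2) by (field; lra).
  assert (2 * t * (1/t) <= 2 * t * (cosh t / sinh t)) by (apply Rmult_le_compat_l; lra).
  pose proof (ln_sub1 ((cosh t ^ 2 + 1) / 2) ltac:(nra)). pose proof (ch_sh t). lra.
Qed.

Lemma small r (Hp : forall t, 0<t<r -> 0<H0 t) x : 0 < x <= r -> 2 < fpaper x.
Proof.
  intro Hx. pose proof (f_incr r Hp (x/2) x ltac:(lra) ltac:(lra) ltac:(lra)).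
  enough (2 <= fpaper (x/2)) by lra.
  destruct (Rle_lt_dec 2 (fpaper (x/2))) as [|Hc]; auto. exfalso.
  set (eps := 2 - fpaper (x/2)).
  set (t := Rmin (x/4) (Rmin 1 (eps/2))).
  assert (Ht : 0 < t /\ t <= x/4 /\ t <= 1 /\ t <= eps/2).
  { unfold t, Rmin. destruct (Rle_dec 1 (eps/2)); destruct (Rle_dec (x/4) _); unfold eps in *; lra. }
  pose proof (f_incr r Hp t (x/2) ltac:(lra) ltac:(lra) ltac:(lra)).
  pose proof (fge t ltac:(lra)). pose proof (tcs t ltac:(lra)). pose proof (sh_pos t ltac:(lra)).
  assert (cosh t <= 2).
  { rewrite ch_e. pose proof e_bnd. pose proof (exp_le' t 1 ltac:(lra)). pose proof (exp_ineq1_le t).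
    pose proof (Eu1 t). set (E := exp t) in *. set (u := / E) in *. assert (u <= 1) by nra. lra. }
  assert (sinh t <= 2 * t) by nra.
  assert (sinh t ^ 2 <= 4 * t * t) by nra.
  unfold eps in *. nra.
Qed.

Lemma big x : 5/2 <= x -> 2 < fpaper x.
Proof.
  intro Hx. rewrite fform by lra. pose proof (sh_pos x ltac:(lra)). pose proof (ch_pos x).
  assert (Hcs : 1 <= cosh x / sinh x).
  { apply le_div; auto. rewrite ch_e, sh_e. pose proof (uE1 x). lra. }
  assert (2 * x <= 2 * x * (cosh x / sinh x)) by (pose proof (Rmult_le_compat_l (2*x) _ _ ltac:(lra) Hcs); lra).
  assert (Hexp : exp (2 * x - 2) = exp x * exp x * / (exp 1 * exp 1)).
  { replace (2 * x - 2) with (x + x + - (1 + 1)) by ring. rewrite !exp_plus, exp_Ropp, exp_plus. reflexivity. }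
  assert (Hv : (cosh x ^ 2 + 1) / 2 < exp (2 * x - 2)).
  { rewrite Hexp, ch_e. pose proof e_bnd as [e1 e2].
    assert (W5 : exp 5 <= exp x * exp x).
    { rewrite <- exp_plus. apply exp_le'. lra. }
    assert (E5 : exp 5 = exp 1 * exp 1 * exp 1 * exp 1 * exp 1).
    { replace 5 with (1+1+1+1+1) by ring. rewrite !exp_plus. reflexivity. }
    pose proof (exp_ineq1_le x). pose proof (Eu1 x). pose proof (exp_pos 1).
    set (e := exp 1) in *. set (E := exp x) in *. set (u := / E) in *.
    assert (e * e <= 27182819/10000000 * (27182819/10000000)) by nra.
    assert (e*e >= 738/100) by nra. assert (e*e*e >= 2006/100) by nra. assert (e*e*e*e >= 545/10) by nra. assert (e*e*e*e*e >= 148) by nra.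
    assert (u <= 1) by nra. assert (0 < u) by (unfold u; apply Rinv_0_lt_compat; lra).
    assert (0 < e * e) by nra.
    apply (Rmult_lt_reg_r (e * e)); auto.
    replace (E * E * / (e * e) * (e * e)) with (E * E) by (field; lra).
    nra. }
  apply ln_increasing in Hv; [| pose proof (pow2_ge_0 (cosh x)); lra]. rewrite ln_exp in Hv. lra.
Qed.

Theorem lemma2 :
  exists x1 : R,
    1606/1000 <= x1 < 1607/1000 /\
    21312/10000 <= fpaper x1 < 21313/10000 /\
    (forall x : R, 0 < x -> 2 < fpaper x /\ fpaper x <= fpaper x1).
Proof.
  destruct root_exists as [r [Hr [Hp Hn]]]. exists r.
  split; [lra|]. split.
  - pose proof Fa_lo. pose proof Fa_hi.
    pose proof (f_incr r Hp (1606/1000) r ltac:(lra) ltac:(lra) ltac:(lra)).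
    destruct (mvt_i fpaper fder (1606/1000) r ltac:(lra)) as [z [Hz E]].
    { intros t Ht. apply dF; lra. }
    pose proof (fder_small z ltac:(lra)).
    assert (fder z * (r - 1606/1000) <= 1/500 * (1/1000)).
    { assert (0 < fder z) by (apply (fder_sign z ltac:(lra)), Hp; lra). nra. }
    lra.
  - intros x Hx. split.
    + destruct (Rle_lt_dec x r). apply (small r Hp); lra.
      destruct (Rlt_le_dec x (5/2)).
      * pose proof (f_decr r ltac:(lra) Hn x (5/2) ltac:(lra) ltac:(lra)). pose proof (big (5/2) ltac:(lra)). lra.
      * apply big; lra.
    + destruct (Rlt_le_dec x r). pose proof (f_incr r Hp x r Hx ltac:(lra) ltac:(lra)); lra.
      destruct (Rle_lt_or_eq_dec _ _ r0) as [h| ->]; [|lra].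
      pose proof (f_decr r ltac:(lra) Hn r x ltac:(lra) h). lra.
Qed.
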